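(* Let $R$ be a finite local Frobenius ring which is not a field, with fixed primitive additive character $\psi$, and let $\tau$ be a non-primitive multiplicative character of $R$. Then: (i) $K_\tau(a)=0$ for every $a\in R\setminus R^\times$; (ii) if $R$ has odd characteristic, then moreover $K_\tau(a)=0$ for every $a\in R$ with $a\notin (R^\times)^2$ (the set of squares of units).
   Context: All rings are finite and commutative with identity; $R^\times$ is the unit group; $M$ is the maximal ideal of the local ring $R$. An additive character $(R,+)\to\mathbb{C}^*$ is primitive if the only ideal on which it is identically $1$ is $(0)$; $R$ is Frobenius if such a character exists. A multiplicative character is a homomorphism $R^\times\to\mathbb{C}^*$. Its conductor is: $R$ if the character is trivial; otherwise the largest ideal $I\subseteq M$ such that the character is identically $1$ on the subgroup $1+I$. A multiplicative character is primitive if its conductor is $(0)$. The twisted Kloosterman sum is $K_\tau(a)=\sum_{u\in R^\times}\tau(u)\psi(u+au^{-1})$. ''Odd characteristic'' for a local ring means the residue field $R/M$ has odd characteristic. *)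

(* Defs.v *)
From HB Require Import structures.
From mathcomp Require Import all_boot all_order all_algebra all_fingroup all_field.
Set Implicit Arguments. Unset Strict Implicit. Unset Printing Implicit Defensive.
Import GRing.Theory.
Local Open Scope ring_scope.

Section Defs.
Variable R : finComUnitRingType.

Definition is_ideal (I : {set R}) : Prop :=
  [/\ 0 \in I,
      (forall x y, x \in I -> y \in I -> x + y \in I) &
      (forall r x, x \in I -> r * x \in I)].

(* The set of non-units; for a local ring this is the maximal ideal M. *)
Definition nonunits : {set R} := [set x | x \isn't a GRing.unit].

(* R is local: it has a unique maximal ideal, i.e. the non-units form an ideal. *)
Definition is_local : Prop := is_ideal nonunits.

Definition is_field : Prop := forall x : R, x != 0 -> x \is a GRing.unit.

Definition add_char (psi : R -> algC) : Prop :=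
  (forall x, psi x != 0) /\ (forall x y, psi (x + y) = psi x * psi y).

Definition primitive_add_char (psi : R -> algC) : Prop :=
  add_char psi /\
  forall I : {set R}, is_ideal I -> (forall x, x \in I -> psi x = 1) -> I = [set 0].

Definition mult_char (tau : {unit R} -> algC) : Prop :=
  (forall u, tau u != 0) /\ (forall u v, tau (u * v)%g = tau u * tau v).

Definition trivial_on_1plus (tau : {unit R} -> algC) (I : {set R}) : Prop :=
  forall u : {unit R}, FinRing.uval u - 1 \in I -> tau u = 1.

(* Conductor of tau is (0): tau is nontrivial and the largest ideal I ⊆ M
   with tau = 1 on 1 + I is (0), i.e. every such ideal is (0). *)
Definition primitive_mult_char (tau : {unit R} -> algC) : Prop :=
  (exists u, tau u != 1) /\
  forall I : {set R}, is_ideal I -> I \subset nonunits ->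
    trivial_on_1plus tau I -> I = [set 0].

Definition kloosterman (psi : R -> algC) (tau : {unit R} -> algC) (a : R) : algC :=
  \sum_(u : {unit R}) tau u * psi (FinRing.uval u + a * (FinRing.uval u)^-1).

(* Residue field R/M has odd characteristic: the prime p with p = 0 in R/M
   (i.e. p%:R in M) is odd. *)
Definition odd_residue_char : Prop :=
  forall p : nat, prime p -> (p%:R : R) \in nonunits -> odd p.

Definition unit_square (a : R) : Prop :=
  exists u : {unit R}, a = FinRing.uval u * FinRing.uval u.

End Defs.

(* Main.v *)
Require Import Defs.
From HB Require Import structures.
From mathcomp Require Import all_boot all_order all_algebra all_fingroup all_field.
From Stdlib Require Import Classical.
From mathcomp Require Import ring.
Import GRing.Theory Num.Theory.
Local Open Scope ring_scope.

Section Aux.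
Variable R : finComUnitRingType.
Hypothesis hloc : is_local R.

Lemma nu_add x y : x \in nonunits R -> y \in nonunits R -> x + y \in nonunits R.
Proof. by case: hloc => _ h _; apply: h. Qed.

Lemma nu_mul r x : x \in nonunits R -> r * x \in nonunits R.
Proof. by case: hloc => _ _ h; apply: h. Qed.

Lemma nu_opp x : x \in nonunits R -> - x \in nonunits R.
Proof. by move=> h; rewrite -mulN1r nu_mul. Qed.

Lemma unit_add_nu u m : u \is a GRing.unit -> m \in nonunits R ->
  u + m \is a GRing.unit.
Proof.
move=> hu hm; apply/negPn/negP => hn.
have : (u + m) + - m \in nonunits R.
  by apply: nu_add; [rewrite inE | apply: nu_opp].
by rewrite addrK inE hu.
Qed.

Lemma minimal_elt (I : {set R}) x : is_ideal I -> x \in I -> x != 0 ->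
  exists y, [/\ y \in I, y != 0 & forall m, m \in nonunits R -> m * y = 0].
Proof.
move=> [I0 ID IM] xI x0.
pose P := fun y => (y \in I) && (y != 0).
pose F := fun y : R => #|[set r * y | r : R]|.
have Px : P x by rewrite /P xI.
case: (arg_minnP F Px) => y /andP [yI y0] ymin.
exists y; split => // m mM; apply/eqP; apply: contraT => my0.
have : P (m * y) by rewrite /P my0 IM.
move/ymin; rewrite /F => hle.
have hsub : [set r * (m * y) | r : R] \proper [set r * y | r : R].
  apply/properP; split.
    apply/subsetP => z /imsetP [r _ ->]; apply/imsetP; exists (r * m) => //.
    by rewrite mulrA.
  exists y; first by apply/imsetP; exists 1; rewrite ?mul1r.
  apply/imsetP => [[r _ hr]].
  have hu : 1 + - (r * m) \is a GRing.unit.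
    by apply: unit_add_nu; rewrite ?unitr1 // nu_opp // nu_mul.
  have : (1 + - (r * m)) * y = 0.
    by rewrite mulrDl mul1r mulNr -mulrA -hr subrr.
  by move/(canRL (mulKr hu)); rewrite mulr0; apply/eqP.
by move: (proper_card hsub); rewrite ltnNge hle.
Qed.


Lemma charsum0 (psi : R -> algC) z : add_char psi ->
  (exists r0, psi (r0 * z) != 1) -> \sum_(r : R) psi (r * z) = 0.
Proof.
move=> [_ hadd] [r0 hr0].
set S := \sum_(r : R) psi (r * z).
have : S = S * psi (r0 * z).
  rewrite {1}/S (reindex_inj (addIr r0)) /S mulr_suml.
  by apply: eq_bigr => r _; rewrite mulrDl hadd.
move/eqP; rewrite -subr_eq0 -{1}(mulr1 S) -mulrBr mulf_eq0 subr_eq0 eq_sym.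
by rewrite [1 == _]eq_sym (negbTE hr0) orbF => /eqP <-.
Qed.

Lemma sqrt1 b : (2%:R : R) \is a GRing.unit -> b - 1 \in nonunits R ->
  exists w, w - 1 \in nonunits R /\ w * w = b.
Proof.
move=> h2 hb.
pose S := [set x : R | x - 1 \in nonunits R].
pose f := fun x : R => x * x.
have sub : [set f x | x in S] \subset S.
  apply/subsetP => z /imsetP [x]; rewrite inE => hx ->.
  rewrite inE /f.
  have -> : x * x - 1 = (x + 1) * (x - 1) by rewrite mulrDl mulrBr mul1r mulr1 addrA subrK.
  exact: nu_mul.
have inj : {in S &, injective f}.
  move=> x y; rewrite !inE /f => hx hy hxy.
  have hu : 2%:R + ((x - 1) + (y - 1)) \is a GRing.unit.
    by apply: unit_add_nu => //; apply: nu_add; rewrite inE.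
  have : (2%:R + ((x - 1) + (y - 1))) * (x - y) = 0.
    have -> : (2%:R + ((x - 1) + (y - 1))) * (x - y) = x * x - y * y by ring.
    by rewrite hxy subrr.
  by move/(canRL (mulKr hu)); rewrite mulr0 => /eqP; rewrite subr_eq0 => /eqP.
have eqS : [set f x | x in S] = S.
  by apply/eqP; rewrite eqEcard sub /= (card_in_imset inj).
have : b \in [set f x | x in S] by rewrite eqS inE.
by case/imsetP => w; rewrite inE => hw ->; exists w.
Qed.


Lemma core (psi : R -> algC) (tau : {unit R} -> algC) x a :
  primitive_add_char psi -> mult_char tau -> x != 0 -> x \in nonunits R ->
  (forall m, m \in nonunits R -> m * x = 0) ->
  (forall (v : {unit R}) r, FinRing.uval v = 1 + r * x -> tau v = 1) ->
  (forall u : {unit R}, FinRing.uval u - a * (FinRing.uval u)^-1 \is a GRing.unit) ->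
  kloosterman psi tau a = 0.
Proof.
move=> [[hpsi0 hadd] hprim] [_ htauM] x0 xM hMx htv hc.
have xx : x * x = 0 by apply: hMx.
have vu r : 1 + r * x \is a GRing.unit by apply: unit_add_nu; rewrite ?unitr1 ?nu_mul.
have key r : kloosterman psi tau a = \sum_(u : {unit R})
   (tau u * psi (FinRing.uval u + a * (FinRing.uval u)^-1)) *
   psi (r * (x * (FinRing.uval u - a * (FinRing.uval u)^-1))).
  rewrite /kloosterman (reindex_inj (mulIg (FinRing.unit R (vu r)))).
  apply: eq_bigr => u _.
  rewrite htauM (htv (FinRing.unit R (vu r)) r) // mulr1 -mulrA -hadd.
  have -> : FinRing.uval (u * FinRing.unit R (vu r))%g = FinRing.uval u * (1 + r * x) by [].
  have hinv : (1 + r * x)^-1 = 1 - r * x.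
    apply: (mulrI (vu r)); rewrite mulrV //.
    have -> : (1 + r * x) * (1 - r * x) = 1 - r * r * (x * x) by ring.
    by rewrite xx mulr0 subr0.
  rewrite invrM ?(valP u) // hinv.
  congr (_ * psi _); ring.
have : kloosterman psi tau a *+ #|R| = 0.
  rewrite -sumr_const.
  transitivity (\sum_(r : R) \sum_(u : {unit R})
   (tau u * psi (FinRing.uval u + a * (FinRing.uval u)^-1)) *
   psi (r * (x * (FinRing.uval u - a * (FinRing.uval u)^-1)))).
    by apply: eq_bigr => r _; apply: key.
  rewrite exchange_big; apply: big1 => u _; rewrite -mulr_sumr charsum0 ?mulr0 //.
  set c := FinRing.uval u - _.
  apply: NNPP => hn.
  have h1 r0 : psi (r0 * x) = 1.
    apply: NNPP => hr0; apply: hn; exists (r0 * c^-1).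
    have -> : r0 * c^-1 * (x * c) = r0 * x * (c^-1 * c) by ring.
    by rewrite mulVr ?hc // mulr1; apply/eqP.
  pose I0 := [set r * x | r : R].
  have : I0 = [set 0].
    apply: hprim.
      split.
      - by apply/imsetP; exists 0; rewrite ?mul0r.
      - move=> y z /imsetP [r1 _ ->] /imsetP [r2 _ ->]; apply/imsetP.
        by exists (r1 + r2); rewrite ?mulrDl.
      - move=> s y /imsetP [r1 _ ->]; apply/imsetP.
        by exists (s * r1); rewrite ?mulrA.
    by move=> y /imsetP [r1 _ ->].
  move/setP/(_ x); rewrite inE.
  have -> : x \in I0 by apply/imsetP; exists 1; rewrite ?mul1r.
  by move=> h; move/negP: x0; apply; exact: (esym h).
move/eqP; rewrite mulrn_eq0 => /orP [| /eqP //].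
by move/eqP/card0_eq/(_ 0); rewrite inE.
Qed.


Lemma get_x (tau : {unit R} -> algC) : ~ is_field R -> ~ primitive_mult_char tau ->
  exists x, [/\ x != 0, x \in nonunits R, (forall m, m \in nonunits R -> m * x = 0)
   & (forall (v : {unit R}) r, FinRing.uval v = 1 + r * x -> tau v = 1)].
Proof.
move=> hnf hnp.
have Mid : is_ideal (nonunits R).
  by split; [rewrite inE unitr0 | exact: nu_add | exact: nu_mul].
case: (classic (exists u, tau u != 1)) => htr.
  have [I [hI hIM htI hI0]] : exists I, [/\ is_ideal I, I \subset nonunits R,
      trivial_on_1plus tau I & I <> [set 0]].
    apply: NNPP => hn; apply: hnp; split => // I hI hIM htI.
    apply: NNPP => hne; apply: hn; by exists I.
  have [x xI x0] : exists2 x, x \in I & x != 0.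
    apply: NNPP => hn; apply: hI0; apply/setP => z; rewrite inE.
    apply/idP/eqP => [zI | ->]; last by case: hI.
    by apply: NNPP => hz; apply: hn; exists z => //; apply/eqP.
  have [y [yI y0 hy]] := @minimal_elt _ _ hI xI x0.
  exists y; split => //; first by apply: (subsetP hIM).
  move=> v r hv; apply: htI; rewrite hv addrC addKr.
  by case: hI => _ _; apply.
have [x [xM x0]] : exists x, x \in nonunits R /\ x != 0.
  apply: NNPP => hn; apply: hnf => x x0; apply: NNPP => hx; apply: hn.
  by exists x; rewrite inE; split => //; apply/negP.
have [y [yI y0 hy]] := @minimal_elt _ _ Mid xM x0.
exists y; split => // v r _.
by apply: NNPP => hv; apply: htr; exists v; apply/eqP.
Qed.

End Aux.

Theorem mainTheorem3 (R : finComUnitRingType)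
  (psi : R -> algC) (tau : {unit R} -> algC)
  (hloc : is_local R) (hnf : ~ is_field R)
  (hpsi : primitive_add_char psi)
  (htau : mult_char tau) (hnp : ~ primitive_mult_char tau) :
  (forall a : R, a \isn't a GRing.unit -> kloosterman psi tau a = 0) /\
  (odd_residue_char R ->
     forall a : R, ~ unit_square a -> kloosterman psi tau a = 0).
Proof.
have [x [x0 xM hMx htv]] := @get_x R hloc tau hnf hnp.
have part1 : forall a : R, a \isn't a GRing.unit -> kloosterman psi tau a = 0.
  move=> a ha; apply: (@core R hloc psi tau x a hpsi htau x0 xM hMx htv) => u.
  have -> : FinRing.uval u - a * (FinRing.uval u)^-1 =
     FinRing.uval u + - ((FinRing.uval u)^-1 * a) by rewrite mulrC.
  apply: (unit_add_nu R hloc _ _ (valP u)).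
  by apply: (nu_opp R hloc) => //; apply: (nu_mul R hloc) => //; rewrite inE.
split => // hodd a hsq.
have [ua | nua] := boolP (a \is a GRing.unit); last exact: part1.
apply: (@core R hloc psi tau x a hpsi htau x0 xM hMx htv) => u.
apply: NNPP => hc; apply: hsq.
have h2 : (2%:R : R) \is a GRing.unit.
  apply: NNPP => h; have := hodd 2 isT; rewrite inE; move/(_ (introN idP h)).
  by [].
set w0 := FinRing.uval u.
have uu : w0 \is a GRing.unit by exact: valP.
have hb : a * w0^-1 * w0^-1 - 1 \in nonunits R.
  have -> : a * w0^-1 * w0^-1 - 1 = - ((w0 - a * w0^-1) * w0^-1).
    rewrite mulrBl divrr //; ring.
  by apply: (nu_opp R hloc) => //; rewrite mulrC; apply: (nu_mul R hloc) => //; rewrite inE; apply/negP.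
have [w [hw1 hww]] := @sqrt1 R hloc _ h2 hb.
have wu : w \is a GRing.unit.
  by rewrite -(subrK 1 w) addrC; apply: (unit_add_nu R hloc); rewrite ?unitr1.
have wuu : w * w0 \is a GRing.unit by rewrite unitrM wu.
exists (FinRing.unit R wuu).
have -> : FinRing.uval (FinRing.unit R wuu) = w * w0 by [].
have -> : w * w0 * (w * w0) = (w * w) * w0 * w0 by ring.
by rewrite hww (mulrVK uu) (mulrVK uu).
Qed.
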